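(* If retreat occurs, then there exist $u,L,c>0$ with $0<u<u_-$ (when $a+b<4$, the requirement $u<u_-$ is dropped) and, for every $\epsilon>0$, a number $x_0(\epsilon)>0$, such that for every solution $\mathbf u(t)$ of the mean-field equations with $\mathbf u(0)\in[0,1]^{\mathbb Z}$: if $u_x(0)\le u$ for all $|x|\le L$, then $u_x(t)\le\epsilon$ for all $t>0$ and all $|x|\le ct-x_0(\epsilon)$.
   Context: Fix $a,b>0$ and $M\ge1$; for $x,y\in\mathbb Z$ write $y\sim x$ iff $0<|x-y|\le M$. Mean-field equations: $u_x'=(a u_x^2+\frac{b}{2M}\sum_{y\sim x}u_y^2)(1-u_x)-u_x$, $x\in\mathbb Z$. Let $r=a+b$; for $r>4$, $u_\pm=1/2\pm(1/4-1/r)^{1/2}$; for $r=4$, $u_-=u_+=1/2$. Retreat (for $r\ge4$): there are $0<u_*<u_-\le u_+<u^*\le1$ such that the solution with $u_x(0)=u^*\mathbf 1(x<0)+u_*\mathbf 1(x\ge0)$ satisfies $u_{-1}(t_0)=u_*$ for some $t_0>0$. By convention, retreat also occurs whenever $r<4$. *)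

(* Defs.v *)
From Stdlib Require Import Reals Lra Lia ZArith.
Open Scope R_scope.

Fixpoint nbr_sum (M : nat) (v : Z -> R) (x : Z) : R :=
  match M with
  | O => 0
  | S k => nbr_sum k v x + v (x - Z.of_nat (S k))%Z + v (x + Z.of_nat (S k))%Z
  end.

Definition mf_rhs (a b : R) (M : nat) (v : Z -> R) (x : Z) : R :=
  (a * (v x)^2 + b / (2 * INR M) * nbr_sum M (fun y => (v y)^2) x) * (1 - v x)
  - v x.

(* A solution of the mean-field equations on [0, +oo): each coordinate is
   right-continuous at 0, differentiable on (0,+oo) with the prescribed
   derivative, and the solution is bounded on compact time intervals
   (the class in which the lattice ODE is well-posed). *)
Definition mf_solution (a b : R) (M : nat) (u : Z -> R -> R) : Prop :=
  (forall x : Z, forall eps, eps > 0 ->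
     exists delta, delta > 0 /\
       forall t, 0 <= t < delta -> Rabs (u x t - u x 0) < eps) /\
  (forall x : Z, forall t, t > 0 ->
     derivable_pt_lim (u x) t (mf_rhs a b M (fun y => u y t) x)) /\
  (forall T, T >= 0 -> exists B, forall x : Z, forall t, 0 <= t <= T ->
     Rabs (u x t) <= B).

(* u_- for r >= 4 (equals 1/2 when r = 4). *)
Definition u_minus (r : R) : R := / 2 - sqrt (/ 4 - / r).
Definition u_plus (r : R) : R := / 2 + sqrt (/ 4 - / r).

Definition retreat (a b : R) (M : nat) : Prop :=
  a + b < 4 \/
  (a + b >= 4 /\
   exists ulow uhigh : R,
     0 < ulow /\ ulow < u_minus (a + b) /\ u_minus (a + b) <= u_plus (a + b) /\
     u_plus (a + b) < uhigh /\ uhigh <= 1 /\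
     exists u : Z -> R -> R, mf_solution a b M u /\
       (forall x : Z, u x 0 = if Z.ltb x 0 then uhigh else ulow) /\
       exists t0, t0 > 0 /\ u (-1)%Z t0 = ulow).

(* Main.v *)
Require Import Defs.
From Stdlib Require Import Reals ZArith Lra Lia Psatz.
Open Scope R_scope.

Lemma deriv_cont (g : R -> R) s d : derivable_pt_lim g s d ->
  forall eps, eps > 0 -> exists al, al > 0 /\
    forall r, Rabs (r - s) < al -> Rabs (g r - g s) < eps.
Proof.
  intros H eps He.
  pose proof (derivable_continuous_pt g s (exist _ d H)) as Hc.
  unfold continuity_pt, continue_in, limit1_in, limit_in in Hc.
  destruct (Hc eps He) as [al [Hal Hr]].
  exists al; split; auto.
  intros r Hrs.
  destruct (Req_dec r s) as [->|Hne].
  - unfold Rminus; rewrite Rplus_opp_r, Rabs_R0; auto.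
  - apply (Hr r). split. unfold D_x, no_cond. split; auto. simpl. unfold R_dist. auto.
Qed.

Lemma le_eps_gen (x y c : R) : 0 <= c -> (forall eta, eta > 0 -> x <= y + eta * c) -> x <= y.
Proof.
  intros Hc H.
  destruct (Rle_dec x y) as [|Hn]; auto.
  assert (Hp : x - y > 0) by lra.
  specialize (H ((x - y) / (2 * (c + 1)))).
  assert (Hq: (x - y) / (2 * (c + 1)) > 0).
  { apply Rdiv_lt_0_compat; lra. }
  specialize (H Hq).
  assert ((x - y) / (2 * (c + 1)) * c < x - y).
  { unfold Rdiv. replace ((x - y) * / (2 * (c + 1)) * c) with ((x-y) * (c / (2*(c+1)))) by (field; lra).
    assert (c / (2 * (c+1)) < 1).
    { apply (Rmult_lt_reg_r (2*(c+1))). lra. unfold Rdiv. rewrite Rmult_assoc, Rinv_l by lra. lra. }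
    assert (0 <= c / (2*(c+1))). { apply Rle_mult_inv_pos; lra. }
    nra. }
  lra.
Qed.

Lemma diff_ineq (g : R -> R) (t1 t delta K : R) :
  t1 <= t -> 0 <= K ->
  (forall eps, eps > 0 -> exists eta, eta > 0 /\
      forall s, t1 <= s < t1 + eta -> Rabs (g s - g t1) < eps) ->
  (forall s, t1 < s <= t -> exists d, derivable_pt_lim g s d /\ (g s > delta -> d <= K)) ->
  g t1 <= delta ->
  g t <= delta + K * (t - t1).
Proof.
  intros Ht HK Hrc Hd Hg1.
  apply (le_eps_gen _ _ (t - t1 + 1)); [lra|].
  intros eta Heta.
  set (hf := fun s => g s - delta - (K + eta) * (s - t1) - eta).
  assert (Hext : forall sg, t1 <= sg < t -> (forall r, t1 <= r <= sg -> hf r <= 0) ->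
            exists ep, ep > 0 /\ forall r, sg <= r < sg + ep -> hf r <= 0).
  { intros sg Hsg Hle.
    destruct (Req_dec sg t1) as [Heq|Hne].
    - subst sg. destruct (Hrc eta Heta) as [et [Het Hr]].
      exists et; split; auto. intros r Hr'.
      specialize (Hr r Hr'). apply Rabs_def2 in Hr. unfold hf.
      assert ((K + eta) * (r - t1) >= 0) by (apply Rle_ge, Rmult_le_pos; lra). lra.
    - destruct (Hd sg ltac:(lra)) as [d [Hdl HdK]].
      assert (Hh2 : eta / 2 > 0) by lra.
      destruct (Hdl (eta/2) Hh2) as [[d0 Hd0] Hq].
      assert (Hstep : forall r, sg < r < sg + d0 -> g r - g sg < (d + eta/2) * (r - sg)).
      { intros r Hr.
        assert (Hne' : r - sg <> 0) by lra.
        assert (Hab : Rabs (r - sg) < d0) by (rewrite Rabs_right; lra).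
        specialize (Hq (r - sg) Hne' Hab).
        replace (sg + (r - sg)) with r in Hq by ring.
        apply Rabs_def2 in Hq. destruct Hq as [Hq1 Hq2].
        assert (Hpos : r - sg > 0) by lra.
        assert ((g r - g sg) / (r - sg) < d + eta/2) by lra.
        apply (Rmult_lt_compat_r (r - sg)) in H; auto.
        unfold Rdiv in H. rewrite Rmult_assoc, Rinv_l in H by lra. lra. }
      assert (Hsgle : hf sg <= 0) by (apply Hle; lra).
      destruct (Rle_dec d K) as [HdK'|HdK'].
      + exists d0; split; auto. intros r Hr.
        destruct (Req_dec r sg) as [->|Hrne]; auto.
        specialize (Hstep r ltac:(lra)). unfold hf in *.
        assert ((d + eta/2) * (r - sg) <= (K + eta) * (r - sg)) by (apply Rmult_le_compat_r; lra).
        lra.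
      + assert (Hneg : hf sg < 0).
        { destruct (Rlt_dec (hf sg) 0); auto.
          exfalso. assert (hf sg = 0) by lra. apply HdK'. apply HdK.
          unfold hf in H. assert ((K + eta) * (sg - t1) >= 0) by (apply Rle_ge, Rmult_le_pos; lra). lra. }
        exists (Rmin d0 (- hf sg / (d - K))).
        split. { apply Rmin_pos; auto. apply Rdiv_lt_0_compat; lra. }
        intros r Hr.
        destruct (Req_dec r sg) as [->|Hrne]; [lra|].
        assert (Hr1 : r < sg + d0) by (pose proof (Rmin_l d0 (- hf sg / (d - K))); lra).
        assert (Hr2 : r - sg < - hf sg / (d - K)) by (pose proof (Rmin_r d0 (- hf sg / (d - K))); lra).
        specialize (Hstep r ltac:(lra)).
        assert ((r - sg) * (d - K) < - hf sg).
        { apply (Rmult_lt_compat_r (d - K)) in Hr2; [|lra].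
          unfold Rdiv in Hr2. rewrite Rmult_assoc, Rinv_l in Hr2 by lra. lra. }
        unfold hf in *. nra. }
  set (A := fun s => t1 <= s <= t /\ forall r, t1 <= r <= s -> hf r <= 0).
  assert (HA1 : A t1).
  { split; [lra|]. intros r Hr. replace r with t1 by lra. unfold hf. lra. }
  assert (HAb : bound A) by (exists t; intros s [Hs _]; lra).
  destruct (completeness A HAb (ex_intro _ t1 HA1)) as [sg [Hub Hlub]].
  assert (Hsg1 : t1 <= sg) by (apply Hub; auto).
  assert (Hsg2 : sg <= t) by (apply Hlub; intros s [Hs _]; lra).
  assert (Hbelow : forall r, t1 <= r < sg -> hf r <= 0).
  { intros r Hr.
    destruct (Rle_dec (hf r) 0) as [|Hpos]; auto. exfalso.
    assert (Hubr : is_upper_bound A r).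
    { intros s [Hs Hs2]. destruct (Rle_dec s r) as [|Hsr]; auto.
      exfalso. apply Hpos. apply Hs2. lra. }
    specialize (Hlub r Hubr). lra. }
  assert (Hsg0 : hf sg <= 0).
  { destruct (Req_dec sg t1) as [->|Hne]. unfold hf; lra.
    destruct (Rle_dec (hf sg) 0) as [|Hpos]; auto. exfalso.
    destruct (Hd sg ltac:(lra)) as [d [Hdl _]].
    destruct (deriv_cont _ _ _ Hdl (hf sg / 2) ltac:(lra)) as [al [Hal Hc]].
    set (r := sg - Rmin al (sg - t1) / 2).
    assert (Hm : 0 < Rmin al (sg - t1)) by (apply Rmin_pos; lra).
    pose proof (Rmin_l al (sg - t1)). pose proof (Rmin_r al (sg - t1)).
    assert (Hr1 : t1 <= r < sg) by (unfold r; lra).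
    specialize (Hbelow r Hr1).
    assert (Hra : Rabs (r - sg) < al) by (unfold r; rewrite Rabs_left; lra).
    specialize (Hc r Hra). apply Rabs_def2 in Hc.
    unfold hf in *. assert ((K + eta) * (sg - r) >= 0) by (apply Rle_ge, Rmult_le_pos; lra).
    nra. }
  assert (HAsg : forall r, t1 <= r <= sg -> hf r <= 0).
  { intros r Hr. destruct (Req_dec r sg) as [->|]; auto. apply Hbelow; lra. }
  assert (Hsgt : sg = t).
  { destruct (Req_dec sg t); auto. exfalso.
    destruct (Hext sg ltac:(lra) HAsg) as [ep [Hep Hr]].
    assert (Hex : exists s', sg < s' <= t /\ s' < sg + ep).
    { destruct (Rle_dec (sg + ep/2) t). exists (sg + ep/2); lra. exists t; lra. }
    destruct Hex as [s' Hs'].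
    assert (HAs : A s').
    { split. lra. intros r Hr'.
      destruct (Rle_dec r sg). apply HAsg; lra. apply Hr. lra. }
    specialize (Hub s' HAs). lra. }
  subst sg. specialize (HAsg t ltac:(lra)). unfold hf in HAsg. nra.
Qed.


Definition good (D : Z -> R -> R) (Mz : Z) (C h : R) : Prop :=
  (0 <= Mz)%Z /\ 0 <= C /\ 0 < h /\ C * h <= / 2 /\
  (forall x t, 0 <= t -> D x t <= 1) /\
  (forall x t1 t dl E, 0 <= t1 <= t -> 0 <= dl -> 0 <= E -> D x t1 <= dl ->
     (forall s z, t1 <= s <= t -> (Z.abs (z - x) <= Mz)%Z -> D z s <= E) ->
     D x t <= dl + C * (t - t1) * E).

Lemma pow2_pos n : 0 < 2 ^ n.
Proof. apply pow_lt; lra. Qed.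

Lemma chunk D Mz C h : good D Mz C h ->
  forall n x T0 dl, 0 <= T0 -> 0 <= dl ->
  (forall z, (Z.abs (z - x) <= Z.of_nat n * Mz)%Z -> D z T0 <= dl) ->
  forall s, 0 <= s <= h -> D x (T0 + s) <= 2 * dl + / 2 ^ n.
Proof.
  intros [HM [HC [Hh [HCh [HD1 HD2]]]]].
  induction n as [|n IH]; intros x T0 dl HT0 Hdl Hball s Hs.
  - rewrite pow_O, Rinv_1. specialize (HD1 x (T0 + s) ltac:(lra)). lra.
  - set (E := 2 * dl + / 2 ^ n).
    assert (HE : 0 <= E) by (unfold E; pose proof (pow2_pos n); pose proof (Rinv_0_lt_compat _ H); lra).
    assert (Hx : D x T0 <= dl). { apply Hball; rewrite Z.sub_diag. nia. }
    pose proof (HD2 x T0 (T0 + s) dl E ltac:(lra) Hdl HE Hx) as Hm.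
    assert (Hn : forall s' z, T0 <= s' <= T0 + s -> (Z.abs (z - x) <= Mz)%Z -> D z s' <= E).
    { intros s' z Hs' Hz. replace s' with (T0 + (s' - T0)) by ring.
      apply IH; auto; [|lra].
      intros z' Hz'. apply Hball. rewrite Nat2Z.inj_succ. lia. }
    specialize (Hm Hn).
    assert (Hcs : C * s <= / 2).
    { apply Rle_trans with (C * h); auto. apply Rmult_le_compat_l; lra. }
    replace (T0 + s - T0) with s in Hm by ring.
    assert (C * s * E <= / 2 * E) by (apply Rmult_le_compat_r; lra).
    simpl. rewrite Rinv_mult. unfold E in *. lra.
Qed.

Lemma LL D Mz C h : good D Mz C h ->
  forall k N x T0 dl, 0 <= T0 -> 0 <= dl ->
  (forall z, (Z.abs (z - x) <= Z.of_nat k * Z.of_nat N * Mz)%Z -> D z T0 <= dl) ->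
  forall s, 0 <= s <= INR k * h -> D x (T0 + s) <= 2 ^ k * (dl + / 2 ^ N).
Proof.
  intros Hg. pose proof Hg as [HM [HC [Hh [HCh [HD1 HD2]]]]].
  assert (HiN : forall N, 0 < / 2 ^ N) by (intros; apply Rinv_0_lt_compat, pow2_pos).
  induction k as [|k IH]; intros N x T0 dl HT0 Hdl Hball s Hs.
  - simpl in Hs. replace s with 0 by lra. rewrite Rplus_0_r. simpl.
    assert (D x T0 <= dl) by (apply Hball; rewrite Z.sub_diag; simpl; nia).
    specialize (HiN N). lra.
  - rewrite S_INR in Hs.
    destruct (Rle_dec s h) as [Hsh|Hsh].
    + assert (D x (T0 + s) <= 2 * dl + / 2 ^ N).
      { apply (chunk D Mz C h Hg N x T0 dl); auto; [|lra].
        intros z Hz. apply Hball. rewrite Nat2Z.inj_succ.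
        assert (0 <= Z.of_nat N * Mz)%Z by lia.
        assert (0 <= Z.of_nat k)%Z by lia. nia. }
      assert (1 <= 2 ^ k) by (apply pow_R1_Rle; lra).
      simpl. specialize (HiN N). nra.
    + set (dl' := 2 * dl + / 2 ^ N).
      assert (Hdl' : 0 <= dl') by (unfold dl'; specialize (HiN N); lra).
      replace (T0 + s) with ((T0 + h) + (s - h)) by ring.
      apply Rle_trans with (2 ^ k * (dl' + / 2 ^ N)).
      * apply IH; [lra | auto | | lra].
        intros z Hz. apply (chunk D Mz C h Hg N z T0 dl); auto; [|lra].
        intros z' Hz'. apply Hball. rewrite Nat2Z.inj_succ.
        assert (0 <= Z.of_nat N * Mz)%Z by lia. nia.
      * unfold dl'. simpl. lra.
Qed.

Lemma nat_above y : exists n : nat, y <= INR n.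
Proof.
  destruct (archimed y) as [H1 H2].
  destruct (Z_lt_le_dec (up y) 0) as [Hl|Hl].
  - exists 0%nat. simpl. apply IZR_lt in Hl. lra.
  - exists (Z.to_nat (up y)). rewrite INR_IZR_INZ, Z2Nat.id by lia. lra.
Qed.

Lemma pow2_ge n : INR n + 1 <= 2 ^ n.
Proof.
  induction n. simpl; lra. rewrite S_INR. simpl. pose proof (pos_INR n). lra.
Qed.

Lemma inv_pow2_small eps : eps > 0 -> exists N : nat, / 2 ^ N <= eps.
Proof.
  intros He. destruct (nat_above (/ eps)) as [N HN]. exists N.
  pose proof (pow2_ge N). pose proof (pow2_pos N).
  rewrite <- (Rinv_inv eps). apply Rinv_le_contravar. apply Rinv_0_lt_compat; lra. lra.
Qed.

Lemma global_cp D Mz C h : good D Mz C h ->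
  forall T0, 0 <= T0 -> (forall z, D z T0 <= 0) -> forall x s, 0 <= s -> D x (T0 + s) <= 0.
Proof.
  intros Hg T0 HT0 H0 x s Hs. pose proof Hg as [HM [HC [Hh _]]].
  destruct (nat_above (s / h)) as [k Hk].
  assert (Hks : s <= INR k * h).
  { apply (Rmult_le_compat_r h) in Hk; [|lra]. unfold Rdiv in Hk. rewrite Rmult_assoc, Rinv_l in Hk by lra. lra. }
  destruct (Rle_dec (D x (T0 + s)) 0) as [|Hp]; auto. exfalso.
  set (d := D x (T0 + s)) in *.
  pose proof (pow2_pos k) as Hk2.
  assert (Hq : d / (2 * 2 ^ k) > 0) by (apply Rdiv_lt_0_compat; lra).
  destruct (inv_pow2_small _ Hq) as [N HN].
  pose proof (LL D Mz C h Hg k N x T0 0 HT0 (Rle_refl 0) ltac:(intros; auto) s ltac:(lra)) as HL.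
  fold d in HL. rewrite Rplus_0_l in HL.
  assert (2 ^ k * / 2 ^ N <= 2 ^ k * (d / (2 * 2 ^ k))) by (apply Rmult_le_compat_l; lra).
  replace (2 ^ k * (d / (2 * 2 ^ k))) with (d / 2) in H by (field; lra).
  lra.
Qed.


Definition rc0 (g : R -> R) : Prop := forall eps, eps > 0 -> exists delta, delta > 0 /\
  forall t, 0 <= t < delta -> Rabs (g t - g 0) < eps.

Lemma nbr_nonneg k (f : Z -> R) x : 0 <= nbr_sum k (fun y => f y ^ 2) x.
Proof.
  induction k. simpl; lra. cbn [nbr_sum].
  apply Rplus_le_le_0_compat; [apply Rplus_le_le_0_compat; [exact IHk | apply pow2_ge_0] | apply pow2_ge_0].
Qed.

Lemma nbr_const k c x : nbr_sum k (fun _ => c) x = 2 * INR k * c.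
Proof.
  induction k. simpl; lra. cbn [nbr_sum]. rewrite IHk, S_INR. ring.
Qed.

Lemma nbr_transl k (f : Z -> R) c x : nbr_sum k (fun y => f (y + c)%Z) x = nbr_sum k f (x + c)%Z.
Proof.
  induction k. reflexivity. cbn [nbr_sum]. rewrite IHk.
  replace (x - Z.of_nat (S k) + c)%Z with (x + c - Z.of_nat (S k))%Z by lia.
  replace (x + Z.of_nat (S k) + c)%Z with (x + c + Z.of_nat (S k))%Z by lia. reflexivity.
Qed.

Lemma nbr_refl k (f : Z -> R) x : nbr_sum k (fun y => f (- y)%Z) x = nbr_sum k f (- x)%Z.
Proof.
  induction k. reflexivity. cbn [nbr_sum]. rewrite IHk.
  replace (- (x - Z.of_nat (S k)))%Z with (- x + Z.of_nat (S k))%Z by lia.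
  replace (- (x + Z.of_nat (S k)))%Z with (- x - Z.of_nat (S k))%Z by lia. ring.
Qed.

Lemma nbr_diff k (v w : Z -> R) x E :
  (forall y, 0 <= v y <= 1) -> (forall y, 0 <= w y <= 1) -> 0 <= E ->
  (forall j, (1 <= j <= Z.of_nat k)%Z -> v (x - j)%Z - w (x - j)%Z <= E /\ v (x + j)%Z - w (x + j)%Z <= E) ->
  nbr_sum k (fun y => v y ^ 2) x - nbr_sum k (fun y => w y ^ 2) x <= 4 * INR k * E.
Proof.
  intros Hv Hw HE. induction k; intros Hj.
  - simpl; lra.
  - cbn [nbr_sum]. rewrite S_INR.
    assert (IH' := IHk ltac:(intros j Hj'; apply Hj; lia)).
    destruct (Hj (Z.of_nat (S k)) ltac:(lia)) as [H1 H2].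
    set (p1 := v (x - Z.of_nat (S k))%Z) in *. set (q1 := w (x - Z.of_nat (S k))%Z) in *.
    set (p2 := v (x + Z.of_nat (S k))%Z) in *. set (q2 := w (x + Z.of_nat (S k))%Z) in *.
    assert (Hp1 := Hv (x - Z.of_nat (S k))%Z). assert (Hq1 := Hw (x - Z.of_nat (S k))%Z).
    assert (Hp2 := Hv (x + Z.of_nat (S k))%Z). assert (Hq2 := Hw (x + Z.of_nat (S k))%Z).
    fold p1 q1 p2 q2 in Hp1, Hq1, Hp2, Hq2.
    assert (p1 ^ 2 - q1 ^ 2 <= 2 * E) by nra.
    assert (p2 ^ 2 - q2 ^ 2 <= 2 * E) by nra.
    lra.
Qed.

Lemma key a b M (v w : Z -> R) x E : a > 0 -> b > 0 -> (1 <= M)%nat ->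
  (forall y, 0 <= v y <= 1) -> (forall y, 0 <= w y <= 1) -> w x < v x -> 0 <= E ->
  (forall z, (Z.abs (z - x) <= Z.of_nat M)%Z -> v z - w z <= E) ->
  mf_rhs a b M v x - mf_rhs a b M w x <= 2 * (a + b) * E.
Proof.
  intros Ha Hb HM Hv Hw Hlt HE Hn.
  unfold mf_rhs.
  assert (HS := nbr_diff M v w x E Hv Hw HE ltac:(intros j Hj; split; apply Hn; lia)).
  assert (HS' := nbr_nonneg M w x).
  set (S := nbr_sum M (fun y => v y ^ 2) x) in *.
  set (S' := nbr_sum M (fun y => w y ^ 2) x) in *.
  set (p := v x) in *. set (q := w x) in *.
  assert (Hp := Hv x). assert (Hq := Hw x). fold p q in Hp, Hq.
  assert (Hpq : p - q <= E) by (apply Hn; rewrite Z.sub_diag; simpl; lia).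
  assert (HMr : INR M >= 1) by (apply Rle_ge; replace 1 with (INR 1) by reflexivity; apply le_INR; lia).
  set (be := b / (2 * INR M)).
  assert (Hbe : be > 0) by (unfold be; apply Rdiv_lt_0_compat; lra).
  assert (Hbe4 : be * (4 * INR M * E) = 2 * b * E) by (unfold be; field; lra).
  assert (T1 : p ^ 2 * (1 - p) - q ^ 2 * (1 - q) <= 2 * (p - q)).
  { replace (p ^ 2 * (1 - p) - q ^ 2 * (1 - q)) with ((p - q) * (p + q - (p*p + p*q + q*q))) by ring.
    assert (p + q - (p*p + p*q + q*q) <= 2) by nra. nra. }
  assert (T2 : S * (1 - p) - S' * (1 - q) <= 4 * INR M * E).
  { replace (S * (1 - p) - S' * (1 - q)) with ((S - S') * (1 - p) - S' * (p - q)) by ring.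
    assert (S' * (p - q) >= 0) by (apply Rle_ge, Rmult_le_pos; lra).
    assert (0 <= 4 * INR M * E) by (apply Rmult_le_pos; lra).
    assert ((S - S') * (1 - p) <= 4 * INR M * E).
    { destruct (Rle_dec (S - S') 0). assert ((S - S') * (1 - p) <= 0) by nra. lra.
      apply Rle_trans with ((S - S') * 1). apply Rmult_le_compat_l; lra. lra. }
    lra. }
  assert (a * (p ^ 2 * (1 - p) - q ^ 2 * (1 - q)) <= a * (2 * E)).
  { apply Rmult_le_compat_l; lra. }
  assert (be * (S * (1 - p) - S' * (1 - q)) <= be * (4 * INR M * E)).
  { apply Rmult_le_compat_l; lra. }
  fold be.
  replace ((a * p ^ 2 + be * S) * (1 - p) - p - ((a * q ^ 2 + be * S') * (1 - q) - q))
    with (a * (p ^ 2 * (1 - p) - q ^ 2 * (1 - q)) + be * (S * (1 - p) - S' * (1 - q)) - (p - q)) by ring.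
  lra.
Qed.


Definition subsol a b M (v : Z -> R -> R) : Prop :=
  (forall x, rc0 (v x)) /\
  (forall x t, t > 0 -> exists d, derivable_pt_lim (v x) t d /\ d <= mf_rhs a b M (fun y => v y t) x) /\
  (forall x t, 0 <= t -> 0 <= v x t <= 1).
Definition supsol a b M (v : Z -> R -> R) : Prop :=
  (forall x, rc0 (v x)) /\
  (forall x t, t > 0 -> exists d, derivable_pt_lim (v x) t d /\ d >= mf_rhs a b M (fun y => v y t) x) /\
  (forall x t, 0 <= t -> 0 <= v x t <= 1).
Definition isol a b M (v : Z -> R -> R) : Prop :=
  (forall x, rc0 (v x)) /\
  (forall x t, t > 0 -> derivable_pt_lim (v x) t (mf_rhs a b M (fun y => v y t) x)) /\
  (forall x t, 0 <= t -> 0 <= v x t <= 1).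

Lemma isol_sub a b M v : isol a b M v -> subsol a b M v.
Proof. intros [H1 [H2 H3]]. split; auto. split; auto. intros x t Ht. eexists; split; [apply H2; auto| lra]. Qed.
Lemma isol_sup a b M v : isol a b M v -> supsol a b M v.
Proof. intros [H1 [H2 H3]]. split; auto. split; auto. intros x t Ht. eexists; split; [apply H2; auto| lra]. Qed.

Lemma rcont_at (g : R -> R) t1 : 0 <= t1 -> rc0 g -> (t1 > 0 -> exists d, derivable_pt_lim g t1 d) ->
  forall eps, eps > 0 -> exists eta, eta > 0 /\ forall s, t1 <= s < t1 + eta -> Rabs (g s - g t1) < eps.
Proof.
  intros Ht1 Hrc Hd eps He.
  destruct (Req_dec t1 0) as [->|Hne].
  - destruct (Hrc eps He) as [dl [Hdl Hr]]. exists dl; split; auto. intros s Hs. apply Hr; lra.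
  - destruct (Hd ltac:(lra)) as [d Hdd].
    destruct (deriv_cont _ _ _ Hdd eps He) as [al [Hal Hr]].
    exists al; split; auto. intros s Hs. apply Hr. rewrite Rabs_right; lra.
Qed.

Lemma pair_good a b M v W : a > 0 -> b > 0 -> (1 <= M)%nat ->
  subsol a b M v -> supsol a b M W ->
  good (fun x t => v x t - W x t) (Z.of_nat M) (2 * (a + b)) (/ (4 * (a + b))).
Proof.
  intros Ha Hb HM [Hv1 [Hv2 Hv3]] [Hw1 [Hw2 Hw3]].
  split; [lia|]. split; [lra|]. split; [apply Rinv_0_lt_compat; lra|].
  split; [right; field; lra|]. split.
  { intros x t Ht. specialize (Hv3 x t Ht). specialize (Hw3 x t Ht). lra. }
  intros x t1 t dl E Ht Hdl HE Hx Hn.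
  assert (HC : 0 <= 2 * (a + b) * E) by (apply Rmult_le_pos; lra).
  pose proof (diff_ineq (fun s => v x s - W x s) t1 t dl (2 * (a + b) * E) ltac:(lra) HC) as HD.
  replace (dl + 2 * (a + b) * (t - t1) * E) with (dl + 2 * (a + b) * E * (t - t1)) by ring.
  apply HD; auto.
  - intros eps He.
    assert (He2 : eps / 2 > 0) by lra.
    destruct (rcont_at (v x) t1 ltac:(lra) (Hv1 x)
      ltac:(intros; destruct (Hv2 x t1 H) as [d [Hd _]]; eauto) _ He2) as [e1 [He1 H1]].
    destruct (rcont_at (W x) t1 ltac:(lra) (Hw1 x)
      ltac:(intros; destruct (Hw2 x t1 H) as [d [Hd _]]; eauto) _ He2) as [e2 [He2' H2]].
    exists (Rmin e1 e2). split. apply Rmin_pos; auto.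
    intros s Hs. pose proof (Rmin_l e1 e2). pose proof (Rmin_r e1 e2).
    specialize (H1 s ltac:(lra)). specialize (H2 s ltac:(lra)).
    apply Rabs_def2 in H1. apply Rabs_def2 in H2. apply Rabs_def1; lra.
  - intros s Hs.
    destruct (Hv2 x s ltac:(lra)) as [dv [Hdv Hdvle]].
    destruct (Hw2 x s ltac:(lra)) as [dw [Hdw Hdwge]].
    exists (dv - dw). split. apply derivable_pt_lim_minus; auto.
    intros Hgt.
    assert (Hk := key a b M (fun y => v y s) (fun y => W y s) x E Ha Hb HM
      ltac:(intros; apply Hv3; lra) ltac:(intros; apply Hw3; lra) ltac:(simpl; lra) HE
      ltac:(intros z Hz; apply (Hn s z); auto; lra)).
    lra.
Qed.

Lemma mfsol_isol a b M u : a > 0 -> b > 0 -> (1 <= M)%nat ->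
  mf_solution a b M u -> (forall x, 0 <= u x 0 <= 1) -> isol a b M u.
Proof.
  intros Ha Hb HM [H1 [H2 _]] H0.
  assert (HMr : INR M >= 1) by (apply Rle_ge; replace 1 with (INR 1) by reflexivity; apply le_INR; lia).
  assert (Hbe : b / (2 * INR M) > 0) by (apply Rdiv_lt_0_compat; lra).
  split; [exact H1|]. split; [exact H2|].
  intros x t Ht. split.
  -
    pose proof (diff_ineq (fun s => - u x s) 0 t 0 0 Ht (Rle_refl 0)) as HD.
    cut (- u x t <= 0 + 0 * (t - 0)). lra.
    apply HD.
    + intros eps He. destruct (H1 x eps He) as [dl [Hdl Hr]]. exists dl; split; auto.
      intros s Hs. specialize (Hr s ltac:(lra)). replace (- u x s - - u x 0) with (- (u x s - u x 0)) by ring.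
      rewrite Rabs_Ropp. auto.
    + intros s Hs. eexists. split. apply derivable_pt_lim_opp. apply H2. lra.
      intros Hneg. unfold mf_rhs.
      pose proof (nbr_nonneg M (fun y => u y s) x).
      set (S := nbr_sum M (fun y => u y s ^ 2) x) in *.
      assert (0 <= (a * u x s ^ 2 + b / (2 * INR M) * S)).
      { apply Rplus_le_le_0_compat. apply Rmult_le_pos. lra. apply pow2_ge_0. apply Rmult_le_pos; lra. }
      assert (0 <= (a * u x s ^ 2 + b / (2 * INR M) * S) * (1 - u x s)) by (apply Rmult_le_pos; lra).
      lra.
    + specialize (H0 x). lra.
  - pose proof (diff_ineq (u x) 0 t 1 0 Ht (Rle_refl 0)) as HD.
    cut (u x t <= 1 + 0 * (t - 0)). lra.
    apply HD.
    + intros eps He. destruct (H1 x eps He) as [dl [Hdl Hr]]. exists dl; split; auto. intros s Hs. apply Hr. lra.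
    + intros s Hs. eexists. split. apply H2. lra.
      intros Hgt. unfold mf_rhs.
      pose proof (nbr_nonneg M (fun y => u y s) x).
      set (S := nbr_sum M (fun y => u y s ^ 2) x) in *.
      assert (0 <= (a * u x s ^ 2 + b / (2 * INR M) * S)).
      { apply Rplus_le_le_0_compat. apply Rmult_le_pos. lra. apply pow2_ge_0. apply Rmult_le_pos; lra. }
      assert ((a * u x s ^ 2 + b / (2 * INR M) * S) * (1 - u x s) <= 0).
      { assert (0 <= (a * u x s ^ 2 + b / (2 * INR M) * S) * (u x s - 1)) by (apply Rmult_le_pos; lra). nra. }
      lra.
    + specialize (H0 x). lra.
Qed.

Lemma isol_shift a b M u T : 0 <= T -> isol a b M u -> isol a b M (fun x t => u x (t + T)).
Proof.
  intros HT [H1 [H2 H3]]. split; [|split].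
  - intros x eps He.
    destruct (rcont_at (u x) T HT (H1 x) ltac:(intros; eexists; apply H2; auto) eps He) as [e [He' Hr]].
    exists e; split; auto. intros t Ht. rewrite Rplus_0_l. apply Hr; lra.
  - intros x t Ht. intros eps He.
    destruct (H2 x (t + T) ltac:(lra) eps He) as [dl Hdl].
    exists dl. intros hh Hh Hhh. replace (t + hh + T) with (t + T + hh) by ring. apply Hdl; auto.
  - intros x t Ht. apply H3. lra.
Qed.

Lemma isol_transl a b M u k : isol a b M u -> isol a b M (fun x t => u (x + k)%Z t).
Proof.
  intros [H1 [H2 H3]]. split; [|split].
  - intros x. apply H1.
  - intros x t Ht. unfold mf_rhs.
    rewrite (nbr_transl M (fun y => u y t ^ 2) k x). apply H2; auto.
  - intros x t Ht. apply H3; auto.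
Qed.

Lemma isol_refl a b M u : isol a b M u -> isol a b M (fun x t => u (- x)%Z t).
Proof.
  intros [H1 [H2 H3]]. split; [|split].
  - intros x. apply H1.
  - intros x t Ht. unfold mf_rhs.
    rewrite (nbr_refl M (fun y => u y t ^ 2) x). apply H2; auto.
  - intros x t Ht. apply H3; auto.
Qed.

Lemma const_sup a b M (g g' : R -> R) : (1 <= M)%nat ->
  (forall t, 0 <= t -> derivable_pt_lim g t (g' t)) ->
  (forall t, 0 <= t -> 0 <= g t <= 1) ->
  (forall t, 0 <= t -> g' t >= (a + b) * g t ^ 2 * (1 - g t) - g t) ->
  supsol a b M (fun _ t => g t).
Proof.
  intros HM Hd Hb Hg. split; [|split].
  - intros x eps He.
    destruct (deriv_cont _ _ _ (Hd 0 (Rle_refl 0)) eps He) as [al [Hal Hr]].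
    exists al; split; auto. intros t Ht. apply Hr. rewrite Rminus_0_r, Rabs_right; lra.
  - intros x t Ht. exists (g' t). split. apply Hd; lra.
    unfold mf_rhs. rewrite nbr_const.
    assert (HMr : INR M >= 1) by (apply Rle_ge; replace 1 with (INR 1) by reflexivity; apply le_INR; lia).
    replace ((a * g t ^ 2 + b / (2 * INR M) * (2 * INR M * g t ^ 2)) * (1 - g t) - g t)
      with ((a + b) * g t ^ 2 * (1 - g t) - g t) by (field; lra).
    apply Hg; lra.
  - intros; auto.
Qed.


Lemma dexp A B k t : derivable_pt_lim (fun t => A + B * exp (- k * t)) t (- k * B * exp (- k * t)).
Proof.
  assert (H := derivable_pt_lim_plus (fct_cte A) (mult_real_fct B (comp exp (mult_real_fct (-k) id))) t 0 (B * (exp (-k * t) * (-k * 1)))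
    (derivable_pt_lim_const A t)
    (derivable_pt_lim_scal _ B t _ (derivable_pt_lim_comp (mult_real_fct (-k) id) exp t _ _
       (derivable_pt_lim_scal id (-k) t 1 (derivable_pt_lim_id t)) (derivable_pt_lim_exp _)))).
  replace (- k * B * exp (- k * t)) with (0 + B * (exp (-k * t) * (-k * 1))) by ring.
  exact H.
Qed.

Lemma exp_le_mono x y : x <= y -> exp x <= exp y.
Proof. intros [H|H]. left; apply exp_increasing; auto. subst; lra. Qed.

Lemma exp_small k dl : k > 0 -> dl > 0 -> exists s, s >= 0 /\ forall s', s' >= s -> exp (- k * s') <= dl.
Proof.
  intros Hk Hd. exists (Rabs (ln dl) / k). split.
  { apply Rle_ge, Rle_mult_inv_pos; [apply Rabs_pos | lra]. }
  intros s' Hs'. rewrite <- (exp_ln dl Hd). apply exp_le_mono.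
  assert (k * s' >= Rabs (ln dl)).
  { apply Rle_ge. apply Rge_le in Hs'. apply (Rmult_le_compat_l k) in Hs'; [|lra].
    replace (k * (Rabs (ln dl) / k)) with (Rabs (ln dl)) in Hs' by (field; lra). lra. }
  pose proof (Rle_abs (- ln dl)). rewrite Rabs_Ropp in H0. lra.
Qed.

Lemma cp a b M v W : a > 0 -> b > 0 -> (1 <= M)%nat -> subsol a b M v -> supsol a b M W ->
  forall T0, 0 <= T0 -> (forall z, v z T0 <= W z T0) -> forall x s, 0 <= s -> v x (T0 + s) <= W x (T0 + s).
Proof.
  intros Ha Hb HM Hv HW T0 HT0 H0 x s Hs.
  pose proof (global_cp _ _ _ _ (pair_good a b M v W Ha Hb HM Hv HW) T0 HT0
    ltac:(intros z; specialize (H0 z); simpl; lra) x s Hs). simpl in H. lra.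
Qed.

Lemma cp0 a b M v W : a > 0 -> b > 0 -> (1 <= M)%nat -> subsol a b M v -> supsol a b M W ->
  (forall z, v z 0 <= W z 0) -> forall x s, 0 <= s -> v x s <= W x s.
Proof.
  intros. pose proof (cp a b M v W H H0 H1 H2 H3 0 (Rle_refl 0) H4 x s H5).
  rewrite Rplus_0_l in H6. auto.
Qed.

Lemma ll a b M v W : a > 0 -> b > 0 -> (1 <= M)%nat -> subsol a b M v -> supsol a b M W ->
  forall k N x T0 dl, 0 <= T0 -> 0 <= dl ->
  (forall z, (Z.abs (z - x) <= Z.of_nat k * Z.of_nat N * Z.of_nat M)%Z -> v z T0 <= W z T0 + dl) ->
  forall s, 0 <= s <= INR k * / (4 * (a + b)) -> v x (T0 + s) <= W x (T0 + s) + 2 ^ k * (dl + / 2 ^ N).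
Proof.
  intros Ha Hb HM Hv HW k N x T0 dl HT0 Hdl Hb0 s Hs.
  pose proof (LL _ _ _ _ (pair_good a b M v W Ha Hb HM Hv HW) k N x T0 dl HT0 Hdl
     ltac:(intros z Hz; specialize (Hb0 z Hz); simpl; lra) s Hs). simpl in H. lra.
Qed.

Lemma upm_facts r : r >= 4 ->
  0 < u_minus r /\ u_minus r <= u_plus r /\ u_plus r < 1 /\
  forall p, 1 - r * p * (1 - p) = r * (p - u_minus r) * (p - u_plus r).
Proof.
  intros Hr. unfold u_minus, u_plus.
  assert (H0 : 0 <= / 4 - / r).
  { assert (/ r <= / 4) by (apply Rinv_le_contravar; lra). lra. }
  assert (Hr0 : 0 < / r) by (apply Rinv_0_lt_compat; lra).
  pose proof (sqrt_pos (/4 - /r)) as Hs0.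
  pose proof (sqrt_sqrt (/4 - /r) H0) as Hss.
  set (sq := sqrt (/ 4 - / r)) in *.
  assert (sq < / 2).
  { destruct (Rlt_dec sq (/2)); auto. exfalso. assert (sq * sq >= /4) by nra. lra. }
  split; [lra|]. split; [lra|]. split; [lra|].
  intros p. clearbody sq.
  replace (r * (p - (/ 2 - sq)) * (p - (/ 2 + sq))) with (r * (p * p - p + (/4 - sq * sq))) by field.
  rewrite Hss. field. lra.
Qed.


Lemma exp_neg_le1 k t : 0 <= k -> 0 <= t -> 0 < exp (- k * t) <= 1.
Proof.
  intros Hk Ht. split. apply exp_pos. rewrite <- exp_0. apply exp_le_mono. nra.
Qed.

Lemma decay_sup a b M l c0 : (1 <= M)%nat -> a + b >= 4 -> 0 <= c0 <= l -> l < u_minus (a + b) ->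
  supsol a b M (fun _ t => 0 + c0 * exp (- ((a + b) * (u_minus (a+b) - l) * (u_plus (a+b) - l)) * t)).
Proof.
  intros HM Hr Hc Hl.
  destruct (upm_facts (a+b) Hr) as [Hum [Hmp [Hup Hid]]].
  set (um := u_minus (a+b)) in *. set (up := u_plus (a+b)) in *.
  set (k := (a + b) * (um - l) * (up - l)).
  assert (Hk : 0 <= k) by (unfold k; apply Rmult_le_pos; [apply Rmult_le_pos|]; lra).
  apply (const_sup a b M _ (fun t => - k * c0 * exp (- k * t))); auto.
  - intros t _. apply dexp.
  - intros t Ht. pose proof (exp_neg_le1 k t Hk Ht). split; nra.
  - intros t Ht. pose proof (exp_neg_le1 k t Hk Ht).
    set (g := 0 + c0 * exp (- k * t)).
    assert (Hg : 0 <= g <= l) by (unfold g; split; nra).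
    replace (- k * c0 * exp (- k * t)) with (- k * g) by (unfold g; ring).
    replace ((a + b) * g ^ 2 * (1 - g) - g) with (- g * (1 - (a + b) * g * (1 - g))) by ring.
    rewrite Hid.
    assert ((a+b) * (g - um) * (g - up) >= k).
    { unfold k. replace ((a + b) * (g - um) * (g - up)) with ((a+b) * ((um - g) * (up - g))) by ring.
      replace ((a + b) * (um - l) * (up - l)) with ((a+b) * ((um - l) * (up - l))) by ring.
      apply Rle_ge, Rmult_le_compat_l; [lra|]. apply Rmult_le_compat; lra. }
    nra.
Qed.

Lemma const_level_sup a b M c : (1 <= M)%nat -> a + b >= 4 -> 0 <= c <= 1 ->
  (c <= u_minus (a + b) \/ c >= u_plus (a + b)) -> supsol a b M (fun _ _ => c).
Proof.
  intros HM Hr Hc Hl.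
  destruct (upm_facts (a+b) Hr) as [Hum [Hmp [Hup Hid]]].
  apply (const_sup a b M (fun _ => c) (fun _ => 0)); auto.
  - intros t _. apply (derivable_pt_lim_const c).
  - intros t _.
    replace ((a + b) * c ^ 2 * (1 - c) - c) with (- c * (1 - (a + b) * c * (1 - c))) by ring.
    rewrite Hid. assert ((c - u_minus (a + b)) * (c - u_plus (a + b)) >= 0) by (destruct Hl; nra).
    assert (0 <= c * (a + b) * ((c - u_minus (a + b)) * (c - u_plus (a + b)))).
    { apply Rmult_le_pos. apply Rmult_le_pos; lra. lra. }
    nra.
Qed.

Lemma Q_sup a b M m : (1 <= M)%nat -> a + b >= 4 -> u_plus (a+b) < m < 1 ->
  supsol a b M (fun _ t => m + (1 - m) * exp (- ((a + b) * m * (m - u_minus (a+b)) * (m - u_plus (a+b))) * t)).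
Proof.
  intros HM Hr Hm.
  destruct (upm_facts (a+b) Hr) as [Hum [Hmp [Hup Hid]]].
  set (um := u_minus (a+b)) in *. set (up := u_plus (a+b)) in *.
  set (k := (a + b) * m * (m - um) * (m - up)).
  assert (Hk : 0 <= k) by (unfold k; repeat apply Rmult_le_pos; lra).
  apply (const_sup a b M _ (fun t => - k * (1 - m) * exp (- k * t))); auto.
  - intros t _. apply dexp.
  - intros t Ht. pose proof (exp_neg_le1 k t Hk Ht). split; nra.
  - intros t Ht. pose proof (exp_neg_le1 k t Hk Ht).
    set (g := m + (1 - m) * exp (- k * t)).
    assert (Hg : m <= g <= 1) by (unfold g; split; nra).
    assert (- k * (1 - m) * exp (- k * t) >= - k). { assert (k * ((1 - m) * exp (- k * t)) <= k * 1) by (apply Rmult_le_compat_l; nra). nra. }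
    replace ((a + b) * g ^ 2 * (1 - g) - g) with (- g * (1 - (a + b) * g * (1 - g))) by ring.
    rewrite Hid.
    assert ((g - um) * (g - up) >= (m - um) * (m - up)) by (apply Rle_ge, Rmult_le_compat; lra).
    assert (g * (a + b) * ((g - um) * (g - up)) >= k).
    { unfold k. apply Rle_ge.
      replace ((a + b) * m * (m - um) * (m - up)) with (m * (a + b) * ((m - um) * (m - up))) by ring.
      apply Rmult_le_compat. apply Rmult_le_pos; lra. apply Rmult_le_pos; lra.
      apply Rmult_le_compat_r; lra. lra. }
    nra.
Qed.

Lemma small_r_sup a b M : (1 <= M)%nat -> a > 0 -> b > 0 -> a + b < 4 ->
  supsol a b M (fun _ t => 0 + 1 * exp (- (1 - (a + b) / 4) * t)).
Proof.
  intros HM Ha Hb Hr.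
  set (k := 1 - (a + b) / 4).
  assert (Hk : 0 <= k) by (unfold k; lra).
  apply (const_sup a b M _ (fun t => - k * 1 * exp (- k * t))); auto.
  - intros t _. apply dexp.
  - intros t Ht. pose proof (exp_neg_le1 k t Hk Ht). split; nra.
  - intros t Ht. pose proof (exp_neg_le1 k t Hk Ht).
    set (g := 0 + 1 * exp (- k * t)).
    assert (Hg : 0 <= g <= 1) by (unfold g; split; nra).
    replace (- k * 1 * exp (- k * t)) with (- k * g) by (unfold g; ring).
    unfold k. assert (0 <= g * (a + b) * ((g - /2) * (g - /2))).
    { apply Rmult_le_pos. apply Rmult_le_pos; lra. apply Rle_0_sqr. }
    assert (- (1 - (a + b) / 4) * g - ((a + b) * g ^ 2 * (1 - g) - g) = g * (a + b) * ((g - /2) * (g - /2))) by field.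
    lra.
Qed.


Definition RS a b M ul uh (U : Z -> R -> R) t0 : Prop :=
  a > 0 /\ b > 0 /\ (1 <= M)%nat /\ a + b >= 4 /\ 0 < ul /\ ul < u_minus (a + b) /\
  u_plus (a + b) < uh /\ uh <= 1 /\ isol a b M U /\
  (forall x, U x 0 = if Z.ltb x 0 then uh else ul) /\ t0 > 0 /\ U (-1)%Z t0 = ul.


Lemma U_le_uh (a b : R) (M : nat) (ul uh : R) (U : Z -> R -> R) (t0 : R) (HRS : RS a b M ul uh U t0) : forall x t, 0 <= t -> U x t <= uh.
Proof.
  destruct HRS as [Ha [Hb [HM [Hr [Hul [Hulm [Hup [Huh [HU [H0 [Ht0 Hret]]]]]]]]]]].
  destruct (upm_facts _ Hr) as [Hum [Hmp [Hup1 _]]].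
  intros x t Ht.
  apply (cp0 a b M U (fun _ _ => uh) Ha Hb HM (isol_sub _ _ _ _ HU)
    (const_level_sup a b M uh HM Hr ltac:(lra) ltac:(right; lra))); auto.
  intros z. rewrite H0. destruct (Z.ltb z 0); lra.
Qed.

Lemma U_mono1 (a b : R) (M : nat) (ul uh : R) (U : Z -> R -> R) (t0 : R) (HRS : RS a b M ul uh U t0) : forall x t, 0 <= t -> U (x + 1)%Z t <= U x t.
Proof.
  destruct HRS as [Ha [Hb [HM [Hr [Hul [Hulm [Hup [Huh [HU [H0 [Ht0 Hret]]]]]]]]]]].
  destruct (upm_facts _ Hr) as [Hum [Hmp [Hup1 _]]].
  intros x t Ht.
  apply (cp0 a b M (fun x t => U (x + 1)%Z t) U Ha Hb HM (isol_sub _ _ _ _ (isol_transl _ _ _ _ 1 HU))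
    (isol_sup _ _ _ _ HU)); auto.
  intros z. rewrite !H0.
  destruct (Z.ltb_spec (z + 1) 0); destruct (Z.ltb_spec z 0); try lra; lia.
Qed.

Lemma U_mono (a b : R) (M : nat) (ul uh : R) (U : Z -> R -> R) (t0 : R) (HRS : RS a b M ul uh U t0) : forall x y t, (y <= x)%Z -> 0 <= t -> U x t <= U y t.
Proof.
  intros x y t Hxy Ht.
  replace x with (y + Z.of_nat (Z.to_nat (x - y)))%Z by lia.
  generalize (Z.to_nat (x - y)) as n. induction n.
  - simpl. rewrite Z.add_0_r. lra.
  - rewrite Nat2Z.inj_succ. replace (y + Z.succ (Z.of_nat n))%Z with (y + Z.of_nat n + 1)%Z by lia.
    pose proof (U_mono1 a b M ul uh U t0 HRS (y + Z.of_nat n) t Ht). lra.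
Qed.

Lemma U_step (a b : R) (M : nat) (ul uh : R) (U : Z -> R -> R) (t0 : R) (HRS : RS a b M ul uh U t0) : forall x t, 0 <= t -> U x (t + t0) <= U (x + 1)%Z t.
Proof.
  pose proof HRS as [Ha [Hb [HM [Hr [Hul [Hulm [Hup [Huh [HU [H0 [Ht0 Hret]]]]]]]]]]].
  intros x t Ht.
  apply (cp0 a b M (fun x t => U x (t + t0)) (fun x t => U (x + 1)%Z t) Ha Hb HM
    (isol_sub _ _ _ _ (isol_shift _ _ _ _ t0 ltac:(lra) HU))
    (isol_sup _ _ _ _ (isol_transl _ _ _ _ 1 HU))); auto.
  intros z. rewrite H0. rewrite Rplus_0_l.
  destruct (Z.ltb_spec (z + 1) 0).
  - apply (U_le_uh a b M ul uh U t0 HRS); lra.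
  - rewrite <- Hret. apply (U_mono a b M ul uh U t0 HRS); [lia | lra].
Qed.

Lemma U_steps (a b : R) (M : nat) (ul uh : R) (U : Z -> R -> R) (t0 : R) (HRS : RS a b M ul uh U t0) : forall j x t, 0 <= t -> U x (INR j * t0 + t) <= U (x + Z.of_nat j)%Z t.
Proof.
  pose proof HRS as [Ha [Hb [HM [Hr [Hul [Hulm [Hup [Huh [HU [H0 [Ht0 Hret]]]]]]]]]]].
  induction j; intros x t Ht.
  - simpl. rewrite Rmult_0_l, Rplus_0_l, Z.add_0_r. lra.
  - rewrite S_INR. replace ((INR j + 1) * t0 + t) with ((INR j * t0 + t) + t0) by ring.
    eapply Rle_trans. apply (U_step a b M ul uh U t0 HRS). pose proof (pos_INR j). nra.
    rewrite Nat2Z.inj_succ. replace (x + Z.succ (Z.of_nat j))%Z with ((x + 1) + Z.of_nat j)%Z by lia.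
    apply IHj; auto.
Qed.

Lemma U_front (a b : R) (M : nat) (ul uh : R) (U : Z -> R -> R) (t0 : R) (HRS : RS a b M ul uh U t0) : forall j x, (0 <= x + Z.of_nat j)%Z -> U x (INR j * t0) <= ul.
Proof.
  pose proof HRS as [Ha [Hb [HM [Hr [Hul [Hulm [Hup [Huh [HU [H0 [Ht0 Hret]]]]]]]]]]].
  intros j x Hx. pose proof (U_steps a b M ul uh U t0 HRS j x 0 (Rle_refl 0)). rewrite Rplus_0_r in H.
  rewrite H0 in H. destruct (Z.ltb_spec (x + Z.of_nat j) 0). lia. auto.
Qed.

Lemma U_slack (a b : R) (M : nat) (ul uh : R) (U : Z -> R -> R) (t0 : R) (HRS : RS a b M ul uh U t0) : exists K : nat, (1 <= K)%nat /\ forall x, (-1 <= x)%Z -> U x (INR K * t0) <= ul / 2.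
Proof.
  pose proof HRS as [Ha [Hb [HM [Hr [Hul [Hulm [Hup [Huh [HU [H0 [Ht0 Hret]]]]]]]]]]].
  destruct (upm_facts _ Hr) as [Hum [Hmp [Hup1 _]]].
  set (k := (a + b) * (u_minus (a+b) - ul) * (u_plus (a+b) - ul)).
  assert (Hk : k > 0) by (unfold k; repeat apply Rmult_lt_0_compat; lra).
  destruct (exp_small k (/4) Hk ltac:(lra)) as [s0 [Hs0 Hs0']].
  destruct (nat_above (s0 / t0)) as [m Hm].
  assert (Hmt : s0 <= INR m * t0).
  { apply (Rmult_le_compat_r t0) in Hm; [|lra]. unfold Rdiv in Hm. rewrite Rmult_assoc, Rinv_l in Hm by lra. lra. }
  set (h := / (4 * (a + b))).
  assert (Hh : h > 0) by (unfold h; apply Rinv_0_lt_compat; lra).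
  destruct (nat_above (INR m * t0 / h)) as [k' Hk'].
  assert (Hkh : INR m * t0 <= INR k' * h).
  { apply (Rmult_le_compat_r h) in Hk'; [|lra]. unfold Rdiv in Hk'. rewrite Rmult_assoc, Rinv_l in Hk' by lra. lra. }
  pose proof (pow2_pos k') as Hp2.
  destruct (inv_pow2_small (ul / 4 / 2 ^ k') ltac:(apply Rdiv_lt_0_compat; lra)) as [N' HN'].
  set (rho := (Z.of_nat k' * Z.of_nat N' * Z.of_nat M)%Z).
  assert (Hrho : (0 <= rho)%Z) by (unfold rho; nia).
  set (T0 := INR (Z.to_nat rho + 1) * t0).
  assert (HT0 : 0 <= T0) by (unfold T0; pose proof (pos_INR (Z.to_nat rho + 1)); nra).
  exists (m + (Z.to_nat rho + 1))%nat. split; [lia|].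
  intros x Hx.
  pose proof (ll a b M (fun x t => U x (t + T0)) (fun _ t => 0 + ul * exp (- k * t)) Ha Hb HM
     (isol_sub _ _ _ _ (isol_shift _ _ _ _ T0 HT0 HU))
     (decay_sup a b M ul ul HM Hr ltac:(lra) Hulm) k' N' x 0 0 (Rle_refl 0) (Rle_refl 0)) as HL.
  assert (HL' : U x (0 + INR m * t0 + T0) <= 0 + ul * exp (- k * (0 + INR m * t0)) + 2 ^ k' * (0 + / 2 ^ N')).
  { apply HL; [|split; [pose proof (pos_INR m); nra | exact Hkh]].
    intros z Hz. fold rho in Hz. rewrite Rmult_0_r, exp_0, Rmult_1_r, !Rplus_0_l, Rplus_0_r.
    apply (U_front a b M ul uh U t0 HRS). rewrite Nat2Z.inj_add, Z2Nat.id by lia. simpl. lia. }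
  replace (0 + INR m * t0 + T0) with (INR (m + (Z.to_nat rho + 1)) * t0) in HL'
    by (unfold T0; rewrite plus_INR; ring).
  assert (ul * exp (- k * (0 + INR m * t0)) <= ul / 4).
  { rewrite Rplus_0_l. specialize (Hs0' (INR m * t0) ltac:(lra)). nra. }
  assert (2 ^ k' * / 2 ^ N' <= ul / 4).
  { apply (Rmult_le_compat_l (2 ^ k')) in HN'; [|lra].
    replace (2 ^ k' * (ul / 4 / 2 ^ k')) with (ul / 4) in HN' by (field; lra). lra. }
  lra.
Qed.



Lemma cycle a b M ul uh U t0 (HRS : RS a b M ul uh U t0) (K k2 N2 : nat) :
  (forall x, (-1 <= x)%Z -> U x (INR K * t0) <= ul / 2) ->
  INR K * t0 <= INR k2 * / (4 * (a + b)) ->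
  2 ^ k2 * / 2 ^ N2 <= ul / 2 ->
  forall v, isol a b M v -> forall T (R0 : Z), 0 <= T ->
  (Z.of_nat k2 * Z.of_nat N2 * Z.of_nat M <= R0)%Z ->
  (forall x, v x T <= uh) -> (forall x, (Z.abs x <= R0)%Z -> v x T <= ul) ->
  (forall x, v x (T + INR K * t0) <= uh) /\
  (forall x, (Z.abs x <= R0 + 1)%Z -> v x (T + INR K * t0) <= ul).
Proof.
  intros HK Hk2 HN2 v Hv T R0 HT HR Huh1 Hul1.
  pose proof HRS as [Ha [Hb [HM [Hr [Hul [Hulm [Hup [Huh [HU [H0 [Ht0 Hret]]]]]]]]]]].
  destruct (upm_facts _ Hr) as [Hum [Hmp [Hup1 _]]].
  assert (HKt : 0 <= INR K * t0) by (pose proof (pos_INR K); nra).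
  set (rho := (Z.of_nat k2 * Z.of_nat N2 * Z.of_nat M)%Z) in *.
  assert (Hrho : (0 <= rho)%Z) by (unfold rho; nia).
  split.
  { intros x. apply (cp a b M v (fun _ _ => uh) Ha Hb HM (isol_sub _ _ _ _ Hv)
      (const_level_sup a b M uh HM Hr ltac:(lra) ltac:(right; lra)) T HT Huh1 x); auto. }
  intros x Hx.
  assert (Hsh := isol_sub _ _ _ _ (isol_shift _ _ _ _ T HT Hv)).
  destruct (Z_le_gt_dec x (R0 - rho)) as [Hx1|Hx1].
  - pose proof (ll a b M _ (fun x t => U (x + R0)%Z t) Ha Hb HM Hsh
      (isol_sup _ _ _ _ (isol_transl _ _ _ _ R0 HU)) k2 N2 x 0 0 (Rle_refl 0) (Rle_refl 0)) as HL.
    specialize (HL ltac:(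
      intros z Hz; fold rho in Hz; simpl; rewrite ?Rplus_0_l, ?Rplus_0_r, H0;
      destruct (Z.ltb_spec (z + R0) 0); [apply Huh1 | apply Hul1; lia])).
    specialize (HL (INR K * t0) ltac:(split; lra)).
    rewrite !Rplus_0_l, Rplus_comm in HL.
    assert (U (x + R0)%Z (INR K * t0) <= ul / 2) by (apply HK; lia).
    assert (2 ^ k2 * (0 + / 2 ^ N2) <= ul / 2) by (rewrite Rplus_0_l; lra).
    lra.
  - pose proof (ll a b M _ (fun x t => U (- x + R0)%Z t) Ha Hb HM Hsh
      (isol_sup _ _ _ _ (isol_refl _ _ _ _ (isol_transl _ _ _ _ R0 HU))) k2 N2 x 0 0 (Rle_refl 0) (Rle_refl 0)) as HL.
    specialize (HL ltac:(
      intros z Hz; fold rho in Hz; simpl; rewrite ?Rplus_0_l, ?Rplus_0_r, H0;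
      destruct (Z.ltb_spec (- z + R0) 0); [apply Huh1 | apply Hul1; lia])).
    specialize (HL (INR K * t0) ltac:(split; lra)).
    rewrite !Rplus_0_l, Rplus_comm in HL.
    assert (U (- x + R0)%Z (INR K * t0) <= ul / 2) by (apply HK; lia).
    assert (2 ^ k2 * (0 + / 2 ^ N2) <= ul / 2) by (rewrite Rplus_0_l; lra).
    lra.
Qed.

Lemma cycles a b M ul uh U t0 (HRS : RS a b M ul uh U t0) (K k2 N2 : nat) :
  (forall x, (-1 <= x)%Z -> U x (INR K * t0) <= ul / 2) ->
  INR K * t0 <= INR k2 * / (4 * (a + b)) ->
  2 ^ k2 * / 2 ^ N2 <= ul / 2 ->
  forall v, isol a b M v -> forall T (R0 : Z), 0 <= T ->
  (Z.of_nat k2 * Z.of_nat N2 * Z.of_nat M <= R0)%Z ->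
  (forall x, v x T <= uh) -> (forall x, (Z.abs x <= R0)%Z -> v x T <= ul) ->
  forall j : nat,
  (forall x, v x (T + INR j * (INR K * t0)) <= uh) /\
  (forall x, (Z.abs x <= R0 + Z.of_nat j)%Z -> v x (T + INR j * (INR K * t0)) <= ul).
Proof.
  intros HK Hk2 HN2 v Hv T R0 HT HR H1 H2 j.
  pose proof HRS as [Ha [Hb [HM [Hr [Hul [Hulm [Hup [Huh [HU [H0 [Ht0 Hret]]]]]]]]]]].
  assert (HKt : 0 <= INR K * t0) by (pose proof (pos_INR K); nra).
  induction j.
  - simpl. rewrite Rmult_0_l, Rplus_0_r, Z.add_0_r. auto.
  - destruct IHj as [I1 I2].
    assert (HTj : 0 <= T + INR j * (INR K * t0)) by (pose proof (pos_INR j); nra).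
    destruct (cycle a b M ul uh U t0 HRS K k2 N2 HK Hk2 HN2 v Hv _ (R0 + Z.of_nat j) HTj
      ltac:(lia) I1 I2) as [C1 C2].
    rewrite S_INR. replace (T + (INR j + 1) * (INR K * t0)) with (T + INR j * (INR K * t0) + INR K * t0) by ring.
    split; auto. intros x Hx. apply C2. lia.
Qed.


Definition natup (y : R) : nat := Z.to_nat (up y).

Lemma natup_ge y : y <= INR (natup y).
Proof.
  unfold natup. destruct (archimed y) as [H1 H2].
  destruct (Z_lt_le_dec (up y) 0) as [Hl|Hl].
  - replace (Z.to_nat (up y)) with 0%nat by lia. simpl. apply IZR_lt in Hl. lra.
  - rewrite INR_IZR_INZ, Z2Nat.id by lia. lra.
Qed.

Lemma natup_pow d : d > 0 -> / 2 ^ (natup (/ d)) <= d.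
Proof.
  intros He. pose proof (natup_ge (/ d)) as HN. set (N := natup (/d)) in *.
  pose proof (pow2_ge N). pose proof (pow2_pos N).
  rewrite <- (Rinv_inv d). apply Rinv_le_contravar. apply Rinv_0_lt_compat; lra. lra.
Qed.

Lemma exp_small' k dl s : k > 0 -> dl > 0 -> s >= Rabs (ln dl) / k -> exp (- k * s) <= dl.
Proof.
  intros Hk Hd Hs. rewrite <- (exp_ln dl Hd). apply exp_le_mono.
  assert (k * s >= Rabs (ln dl)).
  { apply Rle_ge. apply Rge_le in Hs. apply (Rmult_le_compat_l k) in Hs; [|lra].
    replace (k * (Rabs (ln dl) / k)) with (Rabs (ln dl)) in Hs by (field; lra). lra. }
  pose proof (Rle_abs (- ln dl)). rewrite Rabs_Ropp in H0. lra.
Qed.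

Lemma floor_nat y : 0 <= y -> exists j : nat, INR j <= y < INR j + 1.
Proof.
  intros Hy. destruct (archimed y) as [H1 H2].
  assert (Hu : (1 <= up y)%Z) by (assert (Hz : (0 < up y)%Z) by (apply lt_IZR; lra); lia).
  exists (Z.to_nat (up y - 1)). rewrite INR_IZR_INZ, Z2Nat.id by lia.
  rewrite minus_IZR. lra.
Qed.

Lemma mul_div_le x h : h > 0 -> x <= INR (natup (x / h)) * h.
Proof.
  intros Hh. pose proof (natup_ge (x / h)) as H.
  apply (Rmult_le_compat_r h) in H; [|lra]. unfold Rdiv in H. rewrite Rmult_assoc, Rinv_l in H by lra. lra.
Qed.

Lemma main_small a b M : a > 0 -> b > 0 -> (1 <= M)%nat -> a + b < 4 ->
  exists (u L c : R) (x0 : R -> R),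
    u > 0 /\ L > 0 /\ c > 0 /\
    (a + b < 4 \/ u < u_minus (a + b)) /\
    (forall eps, eps > 0 -> x0 eps > 0) /\
    forall eps, eps > 0 ->
    forall w : Z -> R -> R, mf_solution a b M w ->
      (forall x : Z, 0 <= w x 0 <= 1) ->
      (forall x : Z, Rabs (IZR x) <= L -> w x 0 <= u) ->
      forall t, t > 0 -> forall x : Z, Rabs (IZR x) <= c * t - x0 eps ->
        w x t <= eps.
Proof.
  intros Ha Hb HM Hr.
  set (k := 1 - (a + b) / 4).
  assert (Hk : k > 0) by (unfold k; lra).
  exists (/2), 1, 1, (fun eps => 1 + Rabs (ln eps) / k).
  split; [lra|]. split; [lra|]. split; [lra|]. split; [left; lra|].
  split. { intros eps He. pose proof (Rabs_pos (ln eps)). assert (0 <= Rabs (ln eps) / k) by (apply Rle_mult_inv_pos; lra). lra. }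
  intros eps He w Hw H01 _ t Ht x Hx.
  assert (Hwi := mfsol_isol a b M w Ha Hb HM Hw H01).
  pose proof (cp0 a b M w _ Ha Hb HM (isol_sub _ _ _ _ Hwi) (small_r_sup a b M HM Ha Hb Hr)
     ltac:(intros z; simpl; rewrite Rmult_0_r, exp_0; specialize (H01 z); lra) x t ltac:(lra)) as H.
  simpl in H. fold k in H.
  pose proof (Rabs_pos (IZR x)).
  assert (exp (- k * t) <= eps) by (apply exp_small'; auto; lra).
  lra.
Qed.

Lemma pow_choice k d : d > 0 -> 2 ^ k * / 2 ^ (natup (/ (d / 2 ^ k))) <= d.
Proof.
  intros Hd. pose proof (pow2_pos k).
  assert (Hq : d / 2 ^ k > 0) by (apply Rdiv_lt_0_compat; lra).
  pose proof (natup_pow _ Hq) as H1.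
  apply (Rmult_le_compat_l (2 ^ k)) in H1; [|lra].
  replace (2 ^ k * (d / 2 ^ k)) with d in H1 by (field; lra). exact H1.
Qed.

Lemma main_big a b M ul uh U t0 : RS a b M ul uh U t0 ->
  exists (u L c : R) (x0 : R -> R),
    u > 0 /\ L > 0 /\ c > 0 /\
    (a + b < 4 \/ u < u_minus (a + b)) /\
    (forall eps, eps > 0 -> x0 eps > 0) /\
    forall eps, eps > 0 ->
    forall w : Z -> R -> R, mf_solution a b M w ->
      (forall x : Z, 0 <= w x 0 <= 1) ->
      (forall x : Z, Rabs (IZR x) <= L -> w x 0 <= u) ->
      forall t, t > 0 -> forall x : Z, Rabs (IZR x) <= c * t - x0 eps ->
        w x t <= eps.
Proof.
  intros HRS. pose proof HRS as [Ha [Hb [HM [Hr [Hul [Hulm [Hup [Huh [HU [H0 [Ht0 Hret]]]]]]]]]]].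
  destruct (upm_facts _ Hr) as [Hum [Hmp [Hup1 _]]].
  destruct (U_slack a b M ul uh U t0 HRS) as [K [HK1 HK]].
  assert (HKt : INR K * t0 > 0).
  { assert (1 <= INR K) by (replace 1 with (INR 1) by reflexivity; apply le_INR; lia). nra. }
  assert (Hh : / (4 * (a + b)) > 0) by (apply Rinv_0_lt_compat; lra).
  pose (h := / (4 * (a + b))). fold h in Hh.
  pose (k2 := natup (INR K * t0 / h)).
  assert (Hk2 : INR K * t0 <= INR k2 * h) by (apply mul_div_le; lra).
  pose (N2 := natup (/ (ul / 2 / 2 ^ k2))).
  assert (HN2 : 2 ^ k2 * / 2 ^ N2 <= ul / 2) by (apply pow_choice; lra).
  pose (rho2 := (Z.of_nat k2 * Z.of_nat N2 * Z.of_nat M)%Z).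
  assert (Hrho2 : (0 <= rho2)%Z) by (unfold rho2; nia).
  pose (m := (u_plus (a + b) + uh) / 2).
  pose (lam := (a + b) * m * (m - u_minus (a + b)) * (m - u_plus (a + b))).
  assert (Hlam : lam > 0) by (unfold lam, m; repeat apply Rmult_lt_0_compat; lra).
  assert (Hm1 : 0 < (uh - m) / (1 - m)) by (unfold m; apply Rdiv_lt_0_compat; lra).
  pose (T1 := Rabs (ln ((uh - m) / (1 - m))) / lam).
  assert (HT1 : 0 <= T1) by (unfold T1; apply Rle_mult_inv_pos; [apply Rabs_pos | lra]).
  assert (HQ : m + (1 - m) * exp (- lam * T1) <= uh).
  { pose proof (exp_small' lam _ T1 Hlam Hm1 ltac:(unfold T1; lra)).
    assert ((1 - m) * exp (- lam * T1) <= (1 - m) * ((uh - m) / (1 - m))).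
    { apply Rmult_le_compat_l; unfold m in *; lra. }
    replace ((1 - m) * ((uh - m) / (1 - m))) with (uh - m) in H1 by (field; unfold m; lra). lra. }
  pose (k1 := natup (T1 / h)).
  assert (Hk1 : T1 <= INR k1 * h) by (apply mul_div_le; lra).
  pose (N1 := natup (/ (ul / 2 / 2 ^ k1))).
  assert (HN1 : 2 ^ k1 * / 2 ^ N1 <= ul / 2) by (apply pow_choice; lra).
  pose (rho1 := (Z.of_nat k1 * Z.of_nat N1 * Z.of_nat M)%Z).
  assert (Hrho1 : (0 <= rho1)%Z) by (unfold rho1; nia).
  pose (kap := (a + b) * (u_minus (a + b) - ul) * (u_plus (a + b) - ul)).
  assert (Hkap : kap > 0) by (unfold kap; repeat apply Rmult_lt_0_compat; lra).
  pose (se := fun eps => Rabs (ln (eps / 2 / ul)) / kap).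
  assert (Hse : forall eps, 0 <= se eps) by (intros; unfold se; apply Rle_mult_inv_pos; [apply Rabs_pos | lra]).
  pose (k3 := fun eps => natup ((se eps + INR K * t0) / h)).
  pose (N3 := fun eps => natup (/ (eps / 2 / 2 ^ (k3 eps)))).
  pose (rho3 := fun eps => (Z.of_nat (k3 eps) * Z.of_nat (N3 eps) * Z.of_nat M)%Z).
  assert (Hrho3 : forall eps, (0 <= rho3 eps)%Z) by (intros; unfold rho3; nia).
  exists (ul / 2), (IZR (rho1 + rho2 + 1)), (/ (INR K * t0)),
    (fun eps => (se eps + T1) / (INR K * t0) + 2 + IZR (rho3 eps)).
  split; [lra|]. split; [apply IZR_lt; lia|]. split; [apply Rinv_0_lt_compat; lra|].
  split; [right; lra|].
  split.
  { intros eps He. assert (0 <= (se eps + T1) / (INR K * t0)) by (apply Rle_mult_inv_pos; [specialize (Hse eps); lra | lra]).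
    assert (0 <= IZR (rho3 eps)) by (apply IZR_le; auto). lra. }
  intros eps He w Hw H01 HL t Ht x Hx.
  assert (Hwi := mfsol_isol a b M w Ha Hb HM Hw H01).
  assert (HwT1 : forall z, w z T1 <= uh).
  { intros z. pose proof (cp0 a b M w _ Ha Hb HM (isol_sub _ _ _ _ Hwi)
      (Q_sup a b M m HM Hr ltac:(unfold m; lra)) ltac:(intros z'; simpl; rewrite Rmult_0_r, exp_0; specialize (H01 z'); lra) z T1 HT1) as H.
    simpl in H. fold lam in H. lra. }
  assert (HwL : forall z, (Z.abs z <= rho2 + 1)%Z -> w z T1 <= ul).
  { intros z Hz.
    pose proof (ll a b M w (fun _ _ => ul / 2) Ha Hb HM (isol_sub _ _ _ _ Hwi)
      (const_level_sup a b M (ul / 2) HM Hr ltac:(lra) ltac:(left; lra)) k1 N1 z 0 0 (Rle_refl 0) (Rle_refl 0)) as H.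
    specialize (H ltac:(intros z' Hz'; rewrite Rplus_0_r; apply HL; rewrite <- abs_IZR; apply IZR_le; fold rho1 in Hz'; lia)).
    specialize (H T1 ltac:(split; [lra | exact Hk1])).
    rewrite Rplus_0_l in H. fold h in H. lra. }
  pose proof (cycles a b M ul uh U t0 HRS K k2 N2 HK Hk2 HN2 w Hwi T1 (rho2 + 1) HT1 ltac:(fold rho2; lia) HwT1 HwL) as HC.
  set (Kt := INR K * t0) in *.
  set (y := (t - se eps - T1) / Kt).
  assert (Hxy : Rabs (IZR x) <= y - 2 - IZR (rho3 eps)).
  { replace (y - 2 - IZR (rho3 eps)) with (/ Kt * t - ((se eps + T1) / Kt + 2 + IZR (rho3 eps))) by (unfold y; field; lra). exact Hx. }
  assert (Hy0 : 0 <= y) by (pose proof (Rabs_pos (IZR x)); pose proof (IZR_le _ _ (Hrho3 eps)); lra).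
  destruct (floor_nat y Hy0) as [j [Hj1 Hj2]].
  assert (Hyk : y * Kt = t - se eps - T1) by (unfold y; field; lra).
  set (Tj := T1 + INR j * Kt).
  assert (HTj : 0 <= Tj) by (unfold Tj; pose proof (pos_INR j); nra).
  assert (Hs1 : se eps <= t - Tj).
  { unfold Tj. assert (INR j * Kt <= y * Kt) by (apply Rmult_le_compat_r; lra). lra. }
  assert (Hs2 : t - Tj < se eps + Kt).
  { unfold Tj. assert (y * Kt < (INR j + 1) * Kt) by (apply Rmult_lt_compat_r; lra). lra. }
  assert (Hk3 : se eps + Kt <= INR (k3 eps) * h) by (apply mul_div_le; lra).
  assert (HN3 : 2 ^ (k3 eps) * / 2 ^ (N3 eps) <= eps / 2) by (apply pow_choice; lra).
  assert (Hxj : (Z.abs x + rho3 eps < Z.of_nat j - 1)%Z).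
  { apply lt_IZR. rewrite plus_IZR, minus_IZR, abs_IZR, <- INR_IZR_INZ. lra. }
  destruct (HC j) as [_ HCj].
  pose proof (ll a b M (fun x t => w x (t + Tj)) (fun _ t => 0 + ul * exp (- kap * t)) Ha Hb HM
     (isol_sub _ _ _ _ (isol_shift _ _ _ _ Tj HTj Hwi))
     (decay_sup a b M ul ul HM Hr ltac:(lra) Hulm) (k3 eps) (N3 eps) x 0 0 (Rle_refl 0) (Rle_refl 0)) as HLL.
  specialize (HLL ltac:(intros z Hz; simpl; rewrite Rmult_0_r, exp_0, Rmult_1_r, !Rplus_0_l, Rplus_0_r;
     apply HCj; fold (rho3 eps) in Hz; lia)).
  specialize (HLL (t - Tj) ltac:(split; [specialize (Hse eps); lra | fold h; lra])).
  simpl in HLL. rewrite !Rplus_0_l in HLL. replace (t - Tj + Tj) with t in HLL by ring.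
  assert (exp (- kap * (t - Tj)) <= eps / 2 / ul) by (apply exp_small'; [lra | apply Rdiv_lt_0_compat; lra | unfold se in Hs1; lra]).
  assert (ul * exp (- kap * (t - Tj)) <= ul * (eps / 2 / ul)) by (apply Rmult_le_compat_l; lra).
  replace (ul * (eps / 2 / ul)) with (eps / 2) in H1 by (field; lra).
  lra.
Qed.


Theorem lemma9p1 (a b : R) (M : nat) (ha : a > 0) (hb : b > 0) (hM : (1 <= M)%nat) :
  retreat a b M ->
  exists (u L c : R) (x0 : R -> R),
    u > 0 /\ L > 0 /\ c > 0 /\
    (a + b < 4 \/ u < u_minus (a + b)) /\
    (forall eps, eps > 0 -> x0 eps > 0) /\
    forall eps, eps > 0 ->
    forall w : Z -> R -> R, mf_solution a b M w ->
      (forall x : Z, 0 <= w x 0 <= 1) ->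
      (forall x : Z, Rabs (IZR x) <= L -> w x 0 <= u) ->
      forall t, t > 0 -> forall x : Z, Rabs (IZR x) <= c * t - x0 eps ->
        w x t <= eps.
Proof.
  intros [Hr | [Hr [ul [uh [Hul [Hulm [Hmp [Hup [Huh [U [HUs [HU0 [t0 [Ht0 Hret]]]]]]]]]]]]]].
  - apply main_small; auto.
  - apply (main_big a b M ul uh U t0).
    assert (HUi : isol a b M U).
    { apply mfsol_isol; auto. intros x. rewrite HU0. destruct (Z.ltb x 0); lra. }
    exact (conj ha (conj hb (conj hM (conj Hr (conj Hul (conj Hulm (conj Hup (conj Huh (conj HUi (conj HU0 (conj Ht0 Hret))))))))))).
Qed.
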